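(* On $\mathbb{R}^d$ with Cartesian coordinates $x^1,\dots,x^d$, let $\vec E=\sum_i x^i\,\partial/\partial x^i$ be the Euler vector field and let $\vec V=\sum_j V^j(x^1,\dots,x^d)\,\partial/\partial x^j$ be a nonzero vector field whose coefficients $V^j$ are homogeneous polynomials of the same total degree $k\geq 2$. Then the bi-vector $P=\vec V\wedge\vec E$ is Poisson, i.e. $[\![P,P]\!]=0$.
   Context: $[\![\cdot,\cdot]\!]$ denotes the Schouten bracket of multivector fields. *)

(* Defs.v *)
From HB Require Import structures.
From mathcomp Require Import all_boot all_order all_algebra.
From mathcomp Require Import reals.
From mathcomp.multinomials Require Import mpoly.
Set Implicit Arguments. Unset Strict Implicit. Unset Printing Implicit Defensive.
Import Order.TTheory GRing.Theory Num.Theory.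
Local Open Scope ring_scope.

(* Multivector fields on R^d with polynomial coefficients, in the Cartesian
   coordinates x^0, ..., x^(d-1) (the variables 'X_i of {mpoly R[d]}).       *)

Definition vfield (R : realType) (d : nat) := 'I_d -> {mpoly R[d]}.

(* A bivector  (1/2) sum_{i,j} P^{ij} d_i /\ d_j  given by its coefficients
   (the antisymmetric matrix P^{ij}). *)
Definition bivector (R : realType) (d : nat) := 'I_d -> 'I_d -> {mpoly R[d]}.

Definition trivector (R : realType) (d : nat) :=
  'I_d -> 'I_d -> 'I_d -> {mpoly R[d]}.

Definition euler (R : realType) (d : nat) : vfield R d := fun i => 'X_i.

Definition wedge (R : realType) (d : nat) (X Y : vfield R d) : bivector R d :=
  fun i j => X i * Y j - X j * Y i.

Definition schouten2 (R : realType) (d : nat) (P Q : bivector R d)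
  : trivector R d :=
  fun i j k => \sum_(l < d)
    (  P l i * (Q j k)^`M(l) + Q l i * (P j k)^`M(l)
     + P l j * (Q k i)^`M(l) + Q l j * (P k i)^`M(l)
     + P l k * (Q i j)^`M(l) + Q l k * (P i j)^`M(l)).

(* Main.v *)
Require Import Defs.
From HB Require Import structures.
From mathcomp Require Import all_boot all_order all_algebra.
From mathcomp Require Import reals.
From mathcomp.multinomials Require Import mpoly.
From mathcomp Require Import ring.
Import Order.TTheory GRing.Theory Num.Theory.
Local Open Scope ring_scope.

Section S.
Variables (R : realType) (d : nat).
Implicit Types (p q : {mpoly R[d]}).

Lemma mderivX1 (i l : 'I_d) : ('X_i : {mpoly R[d]})^`M(l) = (i == l)%:R.
Proof.
rewrite mderivX mnm1E; case: eqP => [->|_]; last by rewrite scale0r.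
have ->: (U_(l) - U_(l) = 0 :> 'X_{1..d})%MM by apply/mnmP=> j; rewrite !mnmE subnn.
by rewrite mpolyX0 scale1r.
Qed.

Lemma euler_mono (m : 'X_{1..d}) :
  \sum_(l < d) ('X_l * ('X_[m] : {mpoly R[d]})^`M(l)) = 'X_[m] *+ mdeg m.
Proof.
have h : forall l : 'I_d, 'X_l * ('X_[m] : {mpoly R[d]})^`M(l) = 'X_[m] *+ m l.
  move=> l; rewrite mderivX -scalerAr -mpolyXD.
  have [->|nz] := eqVneq (m l) 0%N; first by rewrite scale0r mulr0n.
  rewrite addmC submK; last first.
    apply/mnm_lepP => j; rewrite mnm1E; case: eqP => [<-|]; last by [].
    by rewrite lt0n.
  by rewrite scaler_nat.
by rewrite (eq_bigr _ (fun l _ => h l)) mdegE -sumrMnr.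
Qed.

Lemma euler_id p k : p \is k.-homog ->
  \sum_(l < d) ('X_l * p^`M(l)) = p *+ k.
Proof.
move=> /dhomogP hp.
rewrite {1 2}(mpolyE p).
under eq_bigr => l _ do rewrite raddf_sum mulr_sumr.
rewrite exchange_big /= -sumrMnl big_seq [RHS]big_seq.
apply: eq_bigr => m mp.
under eq_bigr => l _ do rewrite linearZ /= -scalerAr.
by rewrite -scaler_sumr euler_mono hp // scalerMnr.
Qed.

Lemma sum_delta (F : 'I_d -> {mpoly R[d]}) c :
  \sum_(l < d) F l * (c == l)%:R = F c.
Proof.
rewrite (bigD1 c) //= eqxx mulr1 big1 ?addr0 // => l /negbTE.
by rewrite eq_sym => ->; rewrite mulr0.
Qed.

Lemma key (k : nat) (V : vfield R d) : (forall j, V j \is k.-homog) ->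
  forall a b c : 'I_d,
  \sum_(l < d) wedge V (@euler R d) l a * (wedge V (@euler R d) b c)^`M(l) =
  'X_a * 'X_c * (\sum_(l < d) V l * (V b)^`M(l))
  - 'X_a * 'X_b * (\sum_(l < d) V l * (V c)^`M(l))
  - k.+1%:R * V a * (V b * 'X_c - V c * 'X_b).
Proof.
move=> hV a b c; rewrite /wedge /euler.
under eq_bigr => l _ do rewrite mderivB !mderivM !mderivX1.
have H : forall l : 'I_d,
  (V l * 'X_a - V a * 'X_l) *
    ((V b)^`M(l) * 'X_c + V b * (c == l)%:R - ((V c)^`M(l) * 'X_b + V c * (b == l)%:R))
  = ('X_a * 'X_c) * (V l * (V b)^`M(l)) + (-('X_a * 'X_b)) * (V l * (V c)^`M(l))
  + ('X_a * V b) * (V l * (c == l)%:R) + (-('X_a * V c)) * (V l * (b == l)%:R)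
  + (-(V a * 'X_c)) * ('X_l * (V b)^`M(l)) + (-(V a * V b)) * ('X_l * (c == l)%:R)
  + (V a * 'X_b) * ('X_l * (V c)^`M(l)) + (V a * V c) * ('X_l * (b == l)%:R).
  by move=> l; ring.
rewrite (eq_bigr _ (fun l _ => H l)) !big_split /= -!mulr_sumr !sum_delta !(fun j => @euler_id _ _ (hV j)).
ring.
Qed.
End S.

Theorem lemmaA1 (R : realType) (d k : nat) (V : vfield R d) :
  (2 <= k)%N ->
  (exists j, V j != 0) ->
  (forall j, V j \is k.-homog) ->
  forall i j l, schouten2 (wedge V (@euler R d)) (wedge V (@euler R d)) i j l = 0.
Proof.
move=> _ _ hV i j l; rewrite /schouten2 !big_split /= !(@key _ _ _ _ hV).
ring.
Qed.
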